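(* $\mathfrak{b}_{\mathrm{game}^*}^{\mathrm{II}} = \mathfrak{c}$. That is, if $\mathcal{A}\subseteq\omega^\omega$ and Player II has a winning strategy in the bounding* game with respect to $\mathcal{A}$, then $|\mathcal{A}|=\mathfrak{c}$ (and such $\mathcal{A}$ of size $\mathfrak{c}$ exist).
   Context: For $\mathcal{A}\subseteq\omega^\omega$, the bounding* game with respect to $\mathcal{A}$ is the infinite two-player game in which, at round $k$, Player I plays $n_k\in\omega$ and then Player II plays $m_k\in\omega$. Player II wins iff $\langle m_k:k\in\omega\rangle\in\mathcal{A}$ and $n_k<m_k$ for infinitely many $k$. $\mathfrak{b}_{\mathrm{game}^*}^{\mathrm{II}}$ is the least $|\mathcal{A}|$ such that Player II has a winning strategy in the bounding* game with respect to $\mathcal{A}$. $\mathfrak{c}=2^{\aleph_0}$. *)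

(* Defs.v *)
From mathcomp Require Import all_boot.
From mathcomp Require Import boolp classical_sets cardinality.
Set Implicit Arguments. Unset Strict Implicit. Unset Printing Implicit Defensive.

Local Open Scope classical_set_scope.

(* A strategy for Player II: given the moves n_0,...,n_k of Player I so far
   (as a finite sequence), return II's answer m_k.  II's own earlier moves are
   determined by the strategy, so this is the usual notion of strategy. *)
Definition strategyII := seq nat -> nat.

Definition playII (sigma : strategyII) (f : nat -> nat) : nat -> nat :=
  fun k => sigma [seq f i | i <- iota 0 k.+1].

Definition winningII (A : set (nat -> nat)) (sigma : strategyII) : Prop :=
  forall f : nat -> nat,
    A (playII sigma f) /\
    (forall N : nat, exists k : nat, (N <= k)%N /\ (f k < playII sigma f k)%N).

Definition II_has_winning_strategy (A : set (nat -> nat)) : Prop :=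
  exists sigma : strategyII, winningII A sigma.

(* Main.v *)
Require Import Defs.
From mathcomp Require Import all_boot.
From mathcomp Require Import boolp classical_sets cardinality.
Local Open Scope classical_set_scope.
Local Open Scope card_scope.

Lemma inj_leT T U (B : set U) (f : T -> U) :
  injective f -> (forall x, B (f x)) -> [set: T] #<= B.
Proof.
move=> fi fB.
apply: (@card_le_trans _ _ _ (f @` [set: T])).
  have := @inj_card_eq T U [set: T] f (fun x y _ _ => @fi x y).
  by rewrite card_eq_sym card_eq_le => /andP[].
by apply: subset_card_le => _ [x _ <-].
Qed.

Definition enc (f : nat -> nat) : nat -> bool :=
  fun n => match unpickle n with Some (k, j) => f k == j | None => false end.

Lemma enc_inj : injective enc.
Proof.
move=> f g e; apply: funext => k.
have := congr1 (fun h => h (pickle (k, f k))) e.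
rewrite /enc pickleK eqxx => /esym /eqP.
by [].
Qed.

Lemma natnat_le_bool : [set: nat -> nat] #<= [set: nat -> bool].
Proof. exact: (@inj_leT _ _ _ enc enc_inj). Qed.

Lemma bool_le_natnat : [set: nat -> bool] #<= [set: nat -> nat].
Proof.
apply: (@inj_leT _ _ _ (fun (x : nat -> bool) n => nat_of_bool (x n))) => //.
move=> x y e; apply: funext => n.
have := congr1 (fun h => h n) e; by case: (x n); case: (y n).
Qed.

Definition sig0 : strategyII := fun s => (nth 0 s (size s).-1).+1.

Lemma sig0_win : winningII [set: nat -> nat] sig0.
Proof.
move=> f; split => // N; exists N; split => //.
by rewrite /playII /sig0 size_map size_iota (nth_map 0) ?size_iota // nth_iota.
Qed.
Definition agree n (f g : nat -> nat) := forall i, (i < n)%N -> f i = g i.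

Lemma play_dep sigma k f g : agree k.+1 f g -> playII sigma f k = playII sigma g k.
Proof.
move=> ag; rewrite /playII; congr sigma; apply/eq_in_map => i.
by rewrite mem_iota add0n => /andP[_ /ag].
Qed.

Section Tree.
Variables (A : set (nat -> nat)) (sigma : strategyII).
Hypothesis win : winningII A sigma.

Definition SP (p : (nat -> nat) * nat) (t : (nat -> nat) * (nat -> nat) * nat) :=
  [/\ agree p.2 p.1 t.1.1, agree p.2 p.1 t.1.2, (p.2 <= t.2)%N &
      playII sigma t.1.1 t.2 <> playII sigma t.1.2 t.2].

Lemma split_ex p : exists t, SP p t.
Proof.
apply: contrapT => nex.
case: p nex => f n nex.
have H : forall g, agree n f g -> forall k, playII sigma g k = playII sigma f k.
  move=> g ag k; apply: contrapT => ne.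
  case: (leqP n k) => nk.
    by apply: nex; exists (g, f, k); split => //= i.
  apply: ne; apply: play_dep => i ik; apply/esym/ag.
  exact: leq_trans ik nk.
pose f0 i := if (i < n)%N then f i else playII sigma f i.
have ag0 : agree n f f0 by move=> i ilt; rewrite /f0 ilt.
have [_ /(_ n) [k [nk]]] := win f0.
rewrite H // /f0 (_ : (k < n)%N = false) ?ltnn //; by rewrite ltnNge nk.
Qed.

Definition spl p := proj1_sig (cid (split_ex p)).
Lemma splP p : SP p (spl p).
Proof. exact: (proj2_sig (cid (split_ex p))). Qed.

Definition nxt (p : (nat -> nat) * nat) (b : bool) : (nat -> nat) * nat :=
  ((if b then (spl p).1.1 else (spl p).1.2), (spl p).2.+1).

Fixpoint node (x : nat -> bool) (i : nat) : (nat -> nat) * nat :=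
  if i is j.+1 then nxt (node x j) (x j) else ((fun _ => 0), 0).

Lemma node_lvl x i : (i <= (node x i).2)%N.
Proof.
elim: i => //= i IH; have [_ _ le _] := splP (node x i).
by rewrite ltnS (leq_trans IH le).
Qed.

Lemma node_step x i : ((node x i).2 < (node x i.+1).2)%N /\
   agree (node x i).2 (node x i).1 (node x i.+1).1.
Proof.
have [a1 a2 le _] := splP (node x i).
by split; rewrite /= ?ltnS //; case: (x i).
Qed.

Lemma node_mono x i j : (i <= j)%N -> ((node x i).2 <= (node x j).2)%N /\
   agree (node x i).2 (node x i).1 (node x j).1.
Proof.
elim: j => [|j IH]; first by rewrite leqn0 => /eqP ->.
rewrite leq_eqVlt => /orP[/eqP -> //|]; rewrite ltnS => /IH[le ag].
have [lt ag'] := node_step x j.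
split; first exact: leq_trans le (ltnW lt).
move=> k kl; rewrite ag // ag' //; exact: leq_trans kl le.
Qed.

Definition F x k := (node x k.+1).1 k.

Lemma F_agree x i : agree (node x i).2 (node x i).1 (F x).
Proof.
move=> k kl; rewrite /F.
have [_ a1] := node_mono x _ _ (leq_maxl i k.+1).
have [_ a2] := node_mono x _ _ (leq_maxr i k.+1).
rewrite a1 // a2 //; exact: node_lvl.
Qed.

Definition G x := playII sigma (F x).

Lemma G_inj : injective G.
Proof.
move=> x y e; apply: funext => n; apply: contrapT => ne.
have exn : exists i, x i != y i by exists n; apply/eqP.
case: (ex_minnP exn) => i xy imin.
have eqn : forall j, (j <= i)%N -> node x j = node y j.
  elim => [//|j IH] ji; rewrite /= IH ?(ltnW ji) //.
  congr nxt; apply: contrapT => /eqP ne'.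
  by have := imin j ne'; rewrite leqNgt ji.
have [_ _ _ dif] := splP (node x i).
have Ex := F_agree x i.+1; have Ey := F_agree y i.+1.
move: Ex Ey; rewrite /= -(eqn i (leqnn i)) /nxt /=.
move=> Ex Ey.
have := congr1 (fun h => h (spl (node x i)).2) e; rewrite /G.
rewrite -(play_dep _ _ _ _ Ex) -(play_dep _ _ _ _ Ey).
by move: xy; case: (x i); case: (y i) => //= _ /esym.
Qed.

Lemma G_in x : A (G x).
Proof. by have [] := win (F x). Qed.

End Tree.

Theorem mainTheorem3 :
  (forall A : set (nat -> nat),
      II_has_winning_strategy A -> A #= [set: nat -> bool]) /\
  (exists A : set (nat -> nat),
      II_has_winning_strategy A /\ A #= [set: nat -> bool]).
Proof.
split.
  move=> A [sigma win]; apply: Cantor_Bernstein.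
    exact: card_le_trans (card_leT A) natnat_le_bool.
  apply: (@inj_leT _ _ A (@G A sigma win)); [exact: (@G_inj A sigma win) | exact: (@G_in A sigma win)].
exists [set: nat -> nat]; split; first by exists sig0; exact: sig0_win.
exact: Cantor_Bernstein natnat_le_bool bool_le_natnat.
Qed.
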